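(* Let $r\geq 1$ be an integer. Then for any $s\in\mathbb{R}$ with $s>1$, $$ t_r(s)=\sum_{j=0}^{r}\frac{(-1)^{r-j}}{2^{(r-j)s}}\,\zeta_j(s)\,\zeta^{\star}_{r-j}(s) \quad\text{and}\quad t^{\star}_r(s)=\sum_{j=0}^{r}\frac{(-1)^{r-j}}{2^{(r-j)s}}\,\zeta_{r-j}(s)\,\zeta^{\star}_{j}(s). $$
   Context: For an integer $r\geq 1$ and real $s>1$ define, with integer summation indices, $\zeta_r(s):=\sum_{n_1>\cdots>n_r>0}\prod_{i=1}^r n_i^{-s}$, $\zeta^{\star}_r(s):=\sum_{n_1\geq\cdots\geq n_r\geq 1}\prod_{i=1}^r n_i^{-s}$, $t_r(s):=\sum_{n_1>\cdots>n_r>0}\prod_{i=1}^r (2n_i-1)^{-s}$, $t^{\star}_r(s):=\sum_{n_1\geq\cdots\geq n_r\geq 1}\prod_{i=1}^r (2n_i-1)^{-s}$. For $r=0$ all four functions are set equal to $1$: $\zeta_0(s)=\zeta^{\star}_0(s)=t_0(s)=t^{\star}_0(s)=1$. *)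

(* Defs.v *)
From mathcomp Require Import all_boot all_order all_algebra.
From mathcomp Require Import all_classical all_reals all_analysis.
Set Implicit Arguments. Unset Strict Implicit. Unset Printing Implicit Defensive.
Import Order.TTheory GRing.Theory Num.Theory numFieldNormedType.Exports.
Local Open Scope ring_scope.

(* Index tuples (n_1, ..., n_r), represented as finite functions 'I_r -> 'I_N.+1,
   i.e. all entries bounded by N.  (n_1 = t ord_1st, i.e. index 0.) *)

Definition strict_chain (r N : nat) (t : {ffun 'I_r -> 'I_N.+1}) : bool :=
  [forall i : 'I_r, (0 < (t i : nat))%N] &&
  [forall i : 'I_r, forall j : 'I_r, (i < j)%N ==> ((t j : nat) < t i)%N].

Definition weak_chain (r N : nat) (t : {ffun 'I_r -> 'I_N.+1}) : bool :=
  [forall i : 'I_r, (0 < (t i : nat))%N] &&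
  [forall i : 'I_r, forall j : 'I_r, (i < j)%N ==> ((t j : nat) <= t i)%N].

Definition trunc_sum {R : realType} (chain : forall r N, pred {ffun 'I_r -> 'I_N.+1})
    (f : nat -> nat) (r : nat) (s : R) (N : nat) : R :=
  \sum_(t : {ffun 'I_r -> 'I_N.+1} | chain r N t)
     \prod_(i < r) ((f (t i : nat))%:R `^ (- s)).

(* The infinite (nonnegative-term) series is the limit of the box-truncated sums. *)
Definition zeta_r {R : realType} (r : nat) (s : R) : R :=
  limn (trunc_sum strict_chain id r s).
Definition zeta_star_r {R : realType} (r : nat) (s : R) : R :=
  limn (trunc_sum weak_chain id r s).
Definition t_r {R : realType} (r : nat) (s : R) : R :=
  limn (trunc_sum strict_chain (fun n => n.*2.-1) r s).
Definition t_star_r {R : realType} (r : nat) (s : R) : R :=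
  limn (trunc_sum weak_chain (fun n => n.*2.-1) r s).

(* Main.v *)
Require Import Defs.
From mathcomp Require Import all_boot all_order all_algebra.
From mathcomp Require Import all_classical all_reals all_analysis.
From mathcomp Require Import ring lra.
Import Order.TTheory GRing.Theory Num.Theory numFieldNormedType.Exports.
Local Open Scope classical_set_scope.
Local Open Scope ring_scope.
Set Implicit Arguments. Unset Strict Implicit. Unset Printing Implicit Defensive.

Section Comb.
Variable R : realType.
Variable a : nat -> R.

Definition chain_gen (cmp : nat -> nat -> bool) r N (t : {ffun 'I_r -> 'I_N.+1}) : bool :=
  [forall i : 'I_r, (0 < (t i : nat))%N] &&
  [forall i : 'I_r, forall j : 'I_r, (i < j)%N ==> cmp (t j : nat) (t i)].

Definition Gg cmp r N x : R :=
  \sum_(t : {ffun 'I_r -> 'I_N.+1} | chain_gen cmp t && [forall i, cmp (t i : nat) x])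
     \prod_(i < r) a (t i).

Definition fcons r N (y : 'I_N.+1) (g : {ffun 'I_r -> 'I_N.+1}) : {ffun 'I_r.+1 -> 'I_N.+1} :=
  [ffun i => if unlift ord0 i is Some j then g j else y].

Definition fhd r N (t : {ffun 'I_r.+1 -> 'I_N.+1}) := t ord0.
Definition ftl r N (t : {ffun 'I_r.+1 -> 'I_N.+1}) : {ffun 'I_r -> 'I_N.+1} :=
  [ffun j => t (lift ord0 j)].

Lemma fcons0 r N y (g : {ffun 'I_r -> 'I_N.+1}) : fcons y g ord0 = y.
Proof. by rewrite ffunE unlift_none. Qed.
Lemma fconsS r N y (g : {ffun 'I_r -> 'I_N.+1}) j : fcons y g (lift ord0 j) = g j.
Proof. by rewrite ffunE liftK. Qed.

Lemma chain_cons (cmp : nat -> nat -> bool) (cmp_tr : forall a b c, cmp a b -> cmp b c -> cmp a c)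
  r N (x : nat) (y : 'I_N.+1) (g : {ffun 'I_r -> 'I_N.+1}) :
  chain_gen cmp (fcons y g) && [forall i, cmp (fcons y g i : nat) x] =
  [&& (0 < (y : nat))%N, cmp y x, chain_gen cmp g & [forall i, cmp (g i : nat) y]].
Proof.
apply/idP/idP.
- case/andP => /andP[/forallP H0 /forallP H1] /forallP H2.
  have := H0 ord0; rewrite fcons0 => ->.
  have := H2 ord0; rewrite fcons0 => -> /=.
  apply/andP; split; [apply/andP; split|].
  + by apply/forallP => i; have := H0 (lift ord0 i); rewrite fconsS.
  + apply/forallP => i; apply/forallP => j; apply/implyP => ij.
    have := H1 (lift ord0 i) => /forallP /(_ (lift ord0 j)).
    by rewrite !fconsS /= ltnS ij; apply.
  + apply/forallP => i; have := H1 ord0 => /forallP /(_ (lift ord0 i)).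
    by rewrite !fconsS fcons0 lift0.
- case/and4P => y0 yx /andP[/forallP H0 /forallP H1] /forallP H2.
  have Hall : forall i, cmp (fcons y g i : nat) y || (i == ord0).
    move=> i; case: (unliftP ord0 i) => [j ->|->]; last by rewrite eqxx orbT.
    by rewrite fconsS H2.
  apply/andP; split; [apply/andP; split|].
  + apply/forallP => i; case: (unliftP ord0 i) => [j ->|->].
      by rewrite fconsS H0.
    by rewrite fcons0.
  + apply/forallP => i; apply/forallP => j; apply/implyP => ij.
    case: (unliftP ord0 i) => [i' Ei|Ei]; case: (unliftP ord0 j) => [j' Ej|Ej];
      subst i j; rewrite ?fconsS ?fcons0.
    * by move: ij; rewrite !lift0 ltnS => ij; have := H1 i' => /forallP /(_ j') /implyP; apply.
    * by move: ij; rewrite lift0.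
    * exact: H2.
    * by move: ij; rewrite ltnn.
  + apply/forallP => i; case: (unliftP ord0 i) => [j ->|->].
      by rewrite fconsS; apply: cmp_tr (H2 j) yx.
    by rewrite fcons0.
Qed.

Lemma Gg_S (cmp : nat -> nat -> bool) (cmp_tr : forall a b c, cmp a b -> cmp b c -> cmp a c) r N x :
  Gg cmp r.+1 N x = \sum_(y : 'I_N.+1 | (0 < (y:nat))%N && cmp y x) a y * Gg cmp r N y.
Proof.
rewrite /Gg.
rewrite (reindex (fun p : 'I_N.+1 * {ffun 'I_r -> 'I_N.+1} => fcons p.1 p.2)) /=; last first.
  exists (fun t => (fhd t, ftl t)) => [[y g] _|t _] /=.
    rewrite /fhd /ftl fcons0; congr pair; apply/ffunP => j; by rewrite ffunE fconsS.
  apply/ffunP => i; rewrite ffunE /fhd /ftl; case: (unliftP ord0 i) => [j ->|->].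
    by rewrite ffunE.
  by [].
symmetry.
under eq_bigr => y _ do rewrite mulr_sumr.
rewrite pair_big_dep /=; apply: eq_big => [[y g]|[y g] _] /=.
  by rewrite chain_cons // !andbA.
by rewrite big_ord_recl fcons0; congr (_ * _); apply: eq_bigr => i _; rewrite fconsS.
Qed.

Lemma Gg_0 (cmp : nat -> nat -> bool) N x : Gg cmp 0 N x = 1.
Proof.
rewrite /Gg (eq_bigl predT); last first.
  move=> t; apply/andP; split; [apply/andP; split|]; by apply/forallP => -[].
rewrite (eq_bigr (fun _ => 1)); last by move=> t _; rewrite big_ord0.
by rewrite sumr_const card_ffun !card_ord.
Qed.


Lemma sum_cut (F : nat -> R) N x : F 0%N = 0 -> (x <= N.+1)%N ->
  \sum_(y : 'I_N.+1 | (0 < (y:nat))%N && (y < x)%N) F y = \sum_(0 <= y < x) F y.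
Proof.
move=> F0 Hx; rewrite (big_nat_widen 0 x N.+1) // big_mkord !big_mkcond.
rewrite [RHS]big_mkcond; apply: eq_bigr => -[[|i] Hi] _ //=; by rewrite F0; case: ifP.
Qed.

Fixpoint es (r x : nat) : R :=
  if r is r'.+1 then \sum_(0 <= y < x) a y * es r' y else 1.
Fixpoint hw (r x : nat) : R :=
  if r is r'.+1 then \sum_(0 <= y < x.+1) a y * hw r' y else 1.

Lemma Gg_es (a0 : a 0%N = 0) r N x : (x <= N.+1)%N -> Gg (fun u v => (u < v)%N) r N x = es r x.
Proof.
elim: r x => [|r IH] x Hx; first by rewrite Gg_0.
rewrite Gg_S /=; last by move=> u v w; apply: ltn_trans.
rewrite (eq_bigr (fun y : 'I_N.+1 => a y * es r y)); last first.
  by move=> y /andP[_ yx]; rewrite IH //; exact: ltnW (leq_trans yx Hx).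
by rewrite (@sum_cut (fun y => a y * es r y) N x) // a0 mul0r.
Qed.

Lemma Gg_hw (a0 : a 0%N = 0) r N x : (x <= N)%N -> Gg (fun u v => (u <= v)%N) r N x = hw r x.
Proof.
elim: r x => [|r IH] x Hx; first by rewrite Gg_0.
rewrite Gg_S /=; last by move=> u v w; apply: leq_trans.
rewrite (eq_bigr (fun y : 'I_N.+1 => a y * hw r y)); last first.
  by move=> y /andP[_ yx]; rewrite IH //; exact: leq_trans yx Hx.
rewrite -(@sum_cut (fun y => a y * hw r y) N x.+1) ?a0 ?mul0r //.
Qed.

End Comb.

Lemma trunc_strict (R : realType) f r (s : R) N : f 0%N = 0%N -> s != 0 ->
  trunc_sum strict_chain f r s N = es (fun n => (f n)%:R `^ (- s)) r N.+1.
Proof.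
move=> f0 s0; rewrite -(@Gg_es _ _ _ _ N) //; last by rewrite f0 powR0 // oppr_eq0.
rewrite /trunc_sum /Gg; apply: eq_bigl => t.
rewrite (_ : [forall i, _] = true) ?andbT //; apply/forallP => i; exact: ltn_ord.
Qed.

Lemma trunc_weak (R : realType) f r (s : R) N : f 0%N = 0%N -> s != 0 ->
  trunc_sum weak_chain f r s N = hw (fun n => (f n)%:R `^ (- s)) r N.
Proof.
move=> f0 s0; rewrite -(@Gg_hw _ _ _ _ N) //; last by rewrite f0 powR0 // oppr_eq0.
rewrite /trunc_sum /Gg; apply: eq_bigl => t.
rewrite (_ : [forall i, _] = true) ?andbT //; apply/forallP => i; by rewrite -ltnS ltn_ord.
Qed.

Section Alg.
Variable R : realType.

Definition Pe (a : nat -> R) x : {poly R} := \prod_(0 <= y < x) (1 + (a y)%:P * 'X).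

Fixpoint Gp (M : nat) (c : R) : {poly R} :=
  if M is M'.+1 then 1 + c%:P * 'X * Gp M' c else 0.

Definition Qw (M : nat) (a : nat -> R) x : {poly R} := \prod_(0 <= y < x.+1) Gp M (a y).

Lemma Gp_id M c : Gp M c * (1 - c%:P * 'X) = 1 - c%:P ^+ M * 'X ^+ M.
Proof.
elim: M => [|M IH] /=; first by rewrite mul0r !expr0 mulr1 subrr.
rewrite mulrDl mul1r -mulrA IH !exprS; ring.
Qed.

Lemma coef_mulX1 (p : {poly R}) c i :
  (p * (1 + c%:P * 'X))`_i = p`_i + c * (if i is i'.+1 then p`_i' else 0).
Proof.
rewrite mulrDr mulr1 coefD; congr (_ + _).
rewrite mulrCA coefCM coefMX; by case: i.
Qed.

Lemma es_coef a r x : es a r x = (Pe a x)`_r.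
Proof.
elim: x r => [|x IH] r.
  rewrite /Pe big_geq // coef1; case: r => [|r] //=; by rewrite big_geq.
rewrite /Pe big_nat_recr //= -/(Pe a x) coef_mulX1 -IH.
case: r => [|r] /=; first by rewrite mulr0 addr0.
by rewrite big_nat_recr //= -IH.
Qed.

Lemma coef_mul1X (p : {poly R}) c i :
  (p * (1 - c%:P * 'X))`_i.+1 = p`_i.+1 - c * p`_i.
Proof.
rewrite mulrBr mulr1 coefB; congr (_ - _).
by rewrite mulrCA coefCM coefMX.
Qed.

Lemma Gp_coef M c r : (r < M)%N -> (Gp M c)`_r = c ^+ r.
Proof.
elim: M r => [|M IH] [|r] //= H.
  by rewrite coefD coef1 -mulrA coefCM coefXM mulr0 addr0.
by rewrite coefD coef1 -mulrA coefCM coefXM /= IH // add0r exprS.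
Qed.

Lemma hw_coef M a r x : (r < M)%N -> hw a r x = (Qw M a x)`_r.
Proof.
elim: x r => [|x IH] r rM.
  rewrite /Qw big_nat1 Gp_coef //; elim: r rM => [|r IHr] rM //=.
  by rewrite big_nat1 IHr ?exprS // ltnW.
have key : Qw M a x.+1 * (1 - (a x.+1)%:P * 'X) = Qw M a x * (1 - (a x.+1)%:P ^+ M * 'X ^+ M).
  by rewrite /Qw [in LHS]big_nat_recr //= -mulrA Gp_id.
elim: r rM => [|r IHr] rM.
  by rewrite /Qw big_nat_recr //= coef0M -/(Qw M a x) -IH // Gp_coef // mul1r.
have := congr1 (fun p : {poly R} => p`_r.+1) key.
rewrite coef_mul1X mulrBr mulr1 coefB mulrCA -rmorphXn coefCM coefMXn.
have -> : (r.+1 < M)%N by [].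
rewrite mulr0 subr0 -IH // -IHr ?(ltnW rM) // => /eqP; rewrite subr_eq => /eqP ->.
by rewrite /= big_nat_recr.
Qed.
Lemma split_prod (p : nat -> {poly R}) N : p 0%N = 1 ->
  \prod_(0 <= m < (N.*2).+1) p m =
  \prod_(0 <= n < N.+1) p (n.*2.-1) * \prod_(0 <= n < N.+1) p (n.*2).
Proof.
move=> p0; elim: N => [|N IH]; first by rewrite !big_nat1 /= p0 mulr1.
rewrite doubleS big_nat_recr //= big_nat_recr //= IH.
rewrite [X in _ = X * _]big_nat_recr //= [X in _ = _ * X]big_nat_recr //= doubleS /=.
by rewrite mulrACA -!mulrA.
Qed.

Lemma prod_1modX M (b : nat -> R) n : exists q : {poly R},
  \prod_(0 <= y < n) (1 - (b y)%:P ^+ M * 'X^M) = 1 + 'X^M * q.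
Proof.
elim: n => [|n [q IH]]; first by exists 0; rewrite big_geq // mulr0 addr0.
exists (q - (b n)%:P ^+ M - (b n)%:P ^+ M * 'X^M * q).
rewrite big_nat_recr //= IH; ring.
Qed.

Lemma es_hom (u : R) (b : nat -> R) r x : es (fun n => u * b n) r x = u ^+ r * es b r x.
Proof.
elim: r x => [|r IH] x /=; first by rewrite mul1r.
rewrite mulr_sumr; apply: eq_bigr => y _; rewrite IH exprS; ring.
Qed.

Lemma hw_hom (u : R) (b : nat -> R) r x : hw (fun n => u * b n) r x = u ^+ r * hw b r x.
Proof.
elim: r x => [|r IH] x /=; first by rewrite mul1r.
rewrite mulr_sumr; apply: eq_bigr => y _; rewrite IH exprS; ring.
Qed.

Lemma coef_mod (p q : {poly R}) M r : (r < M)%N -> (p * (1 + 'X^M * q))`_r = p`_r.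
Proof. by move=> rM; rewrite mulrDr mulr1 coefD mulrCA coefXnM rM addr0. Qed.

Section Ident.
Variable s : R.
Hypothesis s0 : s != 0.
Let c : nat -> R := fun n : nat => (n%:R : R) `^ (- s).
Let k0 : R := (2 : R) `^ (- s).

Lemma c0 : c 0%N = 0.
Proof. by rewrite /c powR0 // oppr_eq0. Qed.

Lemma c2 n : c (n.*2) = k0 * c n.
Proof. by rewrite /c /k0 -muln2 natrM mulrC powRM. Qed.

Lemma ident1 r N :
  es (fun n => c (n.*2.-1)) r N.+1 =
  \sum_(0 <= j < r.+1) (-1) ^+ (r - j) * k0 ^+ (r - j) * es c j (N.*2).+1 * hw c (r - j) N.
Proof.
set M := r.+1.
have E1 : Pe c (N.*2).+1 = Pe (fun n => c (n.*2.-1)) N.+1 * Pe (fun n => c (n.*2)) N.+1.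
  by rewrite /Pe (@split_prod (fun m => 1 + (c m)%:P * 'X) N) // c0 mul0r addr0.
have E2 : Pe (fun n => c (n.*2)) N.+1 * Qw M (fun n => - c (n.*2)) N =
    \prod_(0 <= n < N.+1) (1 - (- c (n.*2))%:P ^+ M * 'X^M).
  have Hn : forall n, (1 - (- c (n.*2))%:P ^+ M * 'X^M) = (1 + (c (n.*2))%:P * 'X) * Gp M (- c (n.*2)).
    by move=> n; rewrite [RHS]mulrC -Gp_id polyCN mulNr opprK.
  by rewrite (eq_bigr _ (fun n _ => Hn n)) big_split.
have [q Eq] := prod_1modX M (fun n => - c (n.*2)) N.+1.
rewrite es_coef -(@coef_mod _ q M r) // -Eq -E2 mulrA -E1 coefM big_mkord.
apply: eq_bigr => j _.
rewrite -es_coef -hw_coef; last by rewrite /M ltnS leq_subr.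
rewrite (_ : (fun n => - c (n.*2)) = (fun n => (- k0) * c n)); last first.
  by apply: funext => n; rewrite c2 mulNr.
by rewrite hw_hom -[- k0]mulN1r exprMn; ring.
Qed.

Lemma ident2 r N :
  hw (fun n => c (n.*2.-1)) r N =
  \sum_(0 <= j < r.+1) (-1) ^+ (r - j) * k0 ^+ (r - j) * es c (r - j) N.+1 * hw c j (N.*2).
Proof.
set M := r.+1.
have E1 : Qw M c (N.*2) = Qw M (fun n => c (n.*2.-1)) N * Qw M (fun n => c (n.*2)) N.
  by rewrite /Qw (@split_prod (fun m => Gp M (c m)) N) // c0 /M /= polyC0 !mul0r addr0.
have E2 : Qw M (fun n => c (n.*2)) N * Pe (fun n => - c (n.*2)) N.+1 =
    \prod_(0 <= n < N.+1) (1 - (c (n.*2))%:P ^+ M * 'X^M).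
  have Hn : forall n, (1 - (c (n.*2))%:P ^+ M * 'X^M) = Gp M (c (n.*2)) * (1 + (- c (n.*2))%:P * 'X).
    by move=> n; rewrite -Gp_id polyCN mulNr.
  by rewrite (eq_bigr _ (fun n _ => Hn n)) big_split.
have [q Eq] := prod_1modX M (fun n => c (n.*2)) N.+1.
rewrite (@hw_coef M) // -(@coef_mod _ q M r) // -Eq -E2 mulrA -E1 coefM big_mkord.
apply: eq_bigr => j _.
rewrite -es_coef -(@hw_coef M) ?ltn_ord //.
rewrite (_ : (fun n => - c (n.*2)) = (fun n => (- k0) * c n)); last first.
  by apply: funext => n; rewrite c2 mulNr.
by rewrite es_hom -[- k0]mulN1r exprMn; ring.
Qed.

End Ident.
End Alg.

Section Bnd.
Variable R : realType.
Variable a : nat -> R.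
Hypothesis a_ge0 : forall n, 0 <= a n.

Lemma es_ge0 r x : 0 <= es a r x.
Proof.
elim: r x => [|r IH] x /=; first exact: ler01.
by apply: sumr_ge0 => y _; apply: mulr_ge0.
Qed.

Lemma hw_ge0 r x : 0 <= hw a r x.
Proof.
elim: r x => [|r IH] x /=; first exact: ler01.
by apply: sumr_ge0 => y _; apply: mulr_ge0.
Qed.

Lemma es_mono r : {homo es a r : x y / (x <= y)%N >-> x <= y}.
Proof.
apply/nondecreasing_seqP => x; case: r => [|r] //=.
rewrite big_nat_recr //= lerDl; exact: mulr_ge0 (a_ge0 _) (es_ge0 _ _).
Qed.

Lemma hw_mono r : {homo hw a r : x y / (x <= y)%N >-> x <= y}.
Proof.
apply/nondecreasing_seqP => x; case: r => [|r] //=.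
rewrite [X in _ <= X]big_nat_recr //= lerDl; exact: mulr_ge0 (a_ge0 _) (hw_ge0 _ _).
Qed.

Variable B : R.
Hypothesis aB : forall x, \sum_(0 <= y < x) a y <= B.

Lemma es_bnd r x : es a r x <= B ^+ r.
Proof.
elim: r x => [|r IH] x /=; first by rewrite expr0.
apply: (@le_trans _ _ (\sum_(0 <= y < x) a y * B ^+ r)).
  by apply: ler_sum => y _; apply: ler_wpM2l.
have B0 : 0 <= B by have := aB 0; rewrite big_geq.
by rewrite -mulr_suml exprS; apply: ler_wpM2r; [exact: exprn_ge0 | exact: aB].
Qed.

Lemma hw_bnd r x : hw a r x <= B ^+ r.
Proof.
elim: r x => [|r IH] x /=; first by rewrite expr0.
apply: (@le_trans _ _ (\sum_(0 <= y < x.+1) a y * B ^+ r)).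
  by apply: ler_sum => y _; apply: ler_wpM2l.
have B0 : 0 <= B by have := aB 0; rewrite big_geq.
by rewrite -mulr_suml exprS; apply: ler_wpM2r; [exact: exprn_ge0 | exact: aB].
Qed.

End Bnd.

Section Zeta.
Variable R : realType.
Variable s : R.
Hypothesis s1 : 1 < s.
Let c : nat -> R := fun n => (n%:R : R) `^ (- s).
Let k0 : R := (2 : R) `^ (- s).

Lemma c_ge0 n : 0 <= c n.
Proof. exact: powR_ge0. Qed.

Lemma c_anti y z : (1 <= y)%N -> (y <= z)%N -> c z <= c y.
Proof.
move=> y1 yz; rewrite /c !powRN lef_pV2 ?posrE ?powR_gt0 ?ltr0n //; last first.
  exact: leq_trans yz.
apply: ge0_ler_powR; rewrite ?nnegrE ?ler0n ?ler_nat //.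
by apply: ltW; apply: lt_trans s1.
Qed.

Lemma c_pow2 k : c (2 ^ k) = k0 ^+ k.
Proof.
by rewrite /c /k0 natrX -powR_mulrn ?ler0n // powRAC powR_mulrn // powR_ge0.
Qed.

Lemma block k : \sum_(2 ^ k <= y < 2 ^ k.+1) c y <= (2 * k0) ^+ k.
Proof.
apply: (@le_trans _ _ (\sum_(2 ^ k <= y < 2 ^ k.+1) c (2 ^ k))).
  apply: ler_sum_nat => i /andP[ki _]; apply: c_anti => //; exact: expn_gt0.
by rewrite sumr_const_nat c_pow2 expnS mul2n -addnn addnK -[k0 ^+ k *+ _]mulr_natl natrX exprMn.
Qed.

Lemma S_pow2 K : \sum_(0 <= y < 2 ^ K) c y <= \sum_(0 <= k < K) (2 * k0) ^+ k.
Proof.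
elim: K => [|K IH].
  by rewrite expn0 big_nat1 big_geq // /c powR0 // oppr_eq0 gt_eqF // (lt_trans ltr01 s1).
rewrite (@big_cat_nat _ _ _ (2 ^ K)) //=; last by rewrite leq_pexp2l.
rewrite big_nat_recr //=; apply: lerD => //; exact: block.
Qed.

Lemma k0_lt : 2 * k0 < 1.
Proof.
have s0 : 0 < s by apply: lt_trans s1.
have h1 : 1 <= (2 : R) `^ (s - 1).
  rewrite -{1}(powRr0 2); apply: ler_powR; by rewrite ?ler1n // subr_ge0 ltW.
have h2 : (2 : R) `^ (s - 1) != 1.
  rewrite powR_eq1 negb_or negb_or; apply/and3P; split.
  - by rewrite pnatr_eq1.
  - by rewrite -leNgt ler0n.
  - by rewrite subr_eq0 gt_eqF.
have h3 : 1 < (2 : R) `^ (s - 1) by rewrite lt_neqAle eq_sym h2 h1.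
rewrite /k0 powRN -(mulr_powRB1 (x := 2)) // ?ler0n // invfM mulrA divff ?pnatr_eq0 // mul1r.
by rewrite invf_lt1 // (lt_trans ltr01).
Qed.

Lemma geom (q : R) K : 0 <= q < 1 -> \sum_(0 <= k < K) q ^+ k <= (1 - q)^-1.
Proof.
case/andP => q0 q1.
have h : (1 - q) * \sum_(0 <= k < K) q ^+ k = 1 - q ^+ K.
  elim: K => [|K IH]; first by rewrite big_geq // mulr0 expr0 subrr.
  rewrite big_nat_recr //= mulrDr IH exprS; ring.
have q1' : 0 < 1 - q by rewrite subr_gt0.
rewrite -[X in X <= _](mulKf (lt0r_neq0 q1')) h -[X in _ <= X]mulr1.
apply: ler_wpM2l; [by rewrite invr_ge0 ltW | by rewrite gerBl exprn_ge0].
Qed.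

Lemma Sbound x : \sum_(0 <= y < x) c y <= (1 - 2 * k0)^-1.
Proof.
have hx : (x <= 2 ^ x)%N by apply: ltnW; apply: ltn_expl.
apply: (@le_trans _ _ (\sum_(0 <= y < 2 ^ x) c y)).
  rewrite [X in _ <= X](@big_cat_nat _ _ _ x) //= lerDl.
  by apply: sumr_ge0 => *; exact: c_ge0.
apply: le_trans (S_pow2 x) _; apply: geom.
by rewrite k0_lt andbT mulr_ge0 // powR_ge0.
Qed.

End Zeta.

Lemma cvg_sumn (R : realType) n (u : nat -> nat -> R) (l : nat -> R) :
  (forall j, u j @ \oo --> l j) ->
  (fun N => \sum_(0 <= j < n) u j N) @ \oo --> \sum_(0 <= j < n) l j.
Proof.
move=> H; elim: n => [|n IH].
  under eq_cvg do rewrite big_geq //.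
  rewrite big_geq //; exact: cvg_cst.
under eq_cvg do rewrite big_nat_recr //=.
rewrite big_nat_recr //=; exact: cvgD.
Qed.


Unset Implicit Arguments.

Theorem theorem1p4 (R : realType) (r : nat) (s : R) :
  (1 <= r)%N -> 1 < s ->
  t_r r s =
    \sum_(0 <= j < r.+1)
      ((-1) ^+ (r - j) / (2 `^ ((r - j)%:R * s)) * zeta_r j s * zeta_star_r (r - j) s)
  /\
  t_star_r r s =
    \sum_(0 <= j < r.+1)
      ((-1) ^+ (r - j) / (2 `^ ((r - j)%:R * s)) * zeta_r (r - j) s * zeta_star_r j s).
Proof.
move=> r1 s1.
have s0 : s != 0 by rewrite gt_eqF // (lt_trans ltr01 s1).
pose c : nat -> R := fun n => (n%:R : R) `^ (- s).
pose k0 : R := (2 : R) `^ (- s).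
pose B : R := (1 - 2 * k0)^-1.
have c0 : forall n, 0 <= c n by move=> n; exact: powR_ge0.
have Bc : forall x, \sum_(0 <= y < x) c y <= B by move=> x; exact: Sbound.
have eZs : forall j N, trunc_sum strict_chain id j s N = es c j N.+1.
  by move=> j N; rewrite trunc_strict.
have eZw : forall j N, trunc_sum weak_chain id j s N = hw c j N.
  by move=> j N; rewrite trunc_weak.
have cZs : forall j, trunc_sum strict_chain id j s @ \oo --> zeta_r j s.
  move=> j; apply: nondecreasing_is_cvgn.
    by move=> n m nm; rewrite !eZs; apply: es_mono.
  by exists (B ^+ j) => _ [n _ <-]; rewrite eZs; apply: es_bnd.
have cZw : forall j, trunc_sum weak_chain id j s @ \oo --> zeta_star_r j s.
  move=> j; apply: nondecreasing_is_cvgn.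
    by move=> n m nm; rewrite !eZw; apply: hw_mono.
  by exists (B ^+ j) => _ [n _ <-]; rewrite eZw; apply: hw_bnd.
have d2 : (fun N : nat => N.*2) @ \oo --> \oo.
  apply/cvgnyPge => A; near=> N; rewrite -addnn (leq_trans _ (leq_addr _ _)) //.
  by near: N; apply: nbhs_infty_ge.
have cZs2 : forall j, (fun N => trunc_sum strict_chain id j s N.*2) @ \oo --> zeta_r j s.
  by move=> j; apply: (cvg_comp _ _ d2 (cZs j)).
have cZw2 : forall j, (fun N => trunc_sum weak_chain id j s N.*2) @ \oo --> zeta_star_r j s.
  by move=> j; apply: (cvg_comp _ _ d2 (cZw j)).
have k0E : forall n, k0 ^+ n = (2 `^ (n%:R * s))^-1.
  move=> n; rewrite /k0 -powR_mulrn ?powR_ge0 // -powRrM mulNr powRN.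
  by rewrite [s * _]mulrC.
split.
- have Et : trunc_sum strict_chain (fun n => n.*2.-1) r s = fun N =>
      \sum_(0 <= j < r.+1) (-1) ^+ (r - j) * k0 ^+ (r - j) *
         trunc_sum strict_chain id j s N.*2 * trunc_sum weak_chain id (r - j) s N.
    apply: funext => N; rewrite trunc_strict // ident1 //.
    by apply: eq_bigr => j _; rewrite eZs eZw.
  rewrite /t_r Et; apply: cvg_lim => //.
  rewrite (eq_bigr (fun j => (-1) ^+ (r - j) * k0 ^+ (r - j) * zeta_r j s * zeta_star_r (r - j) s)); last first.
    by move=> j _; rewrite k0E.
  apply: cvg_sumn => j; apply: cvgM; last exact: cZw.
  apply: cvgM; last exact: cZs2.
  exact: cvg_cst.
- have Et : trunc_sum weak_chain (fun n => n.*2.-1) r s = fun N =>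
      \sum_(0 <= j < r.+1) (-1) ^+ (r - j) * k0 ^+ (r - j) *
         trunc_sum strict_chain id (r - j) s N * trunc_sum weak_chain id j s N.*2.
    apply: funext => N; rewrite trunc_weak // ident2 //.
    by apply: eq_bigr => j _; rewrite eZs eZw.
  rewrite /t_star_r Et; apply: cvg_lim => //.
  rewrite (eq_bigr (fun j => (-1) ^+ (r - j) * k0 ^+ (r - j) * zeta_r (r - j) s * zeta_star_r j s)); last first.
    by move=> j _; rewrite k0E.
  apply: cvg_sumn => j; apply: cvgM; last exact: cZw2.
  apply: cvgM; last exact: cZs.
  exact: cvg_cst.
Unshelve. all: end_near.
Qed.
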